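(* Let $X$ be a $P$-space with $X=\bigcup_{\alpha\in\Lambda}X_\alpha$, where each $X_\alpha$ is a closed locally Menger subspace of $X$ and the family $\{X_\alpha:\alpha\in\Lambda\}$ is locally countable in $X$ (every point has a neighbourhood meeting only countably many $X_\alpha$). Then $X$ is locally Menger.
   Context: A $P$-space is a space in which every countable intersection of open sets is open. A space $X$ is Menger if for each sequence $(\mathcal{U}_n)$ of open covers of $X$ there is a sequence $(\mathcal{V}_n)$ with each $\mathcal{V}_n$ a finite subset of $\mathcal{U}_n$ and $\bigcup_{n}\bigcup\mathcal{V}_n=X$. A space $X$ is locally Menger if for each $x\in X$ there exist an open set $U$ and a Menger subspace $Y$ of $X$ with $x\in U\subseteq Y$. *)

(* Defs.v *)
From mathcomp Require Import all_boot all_order.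
From mathcomp Require Import all_classical topology.
Set Implicit Arguments. Unset Strict Implicit. Unset Printing Implicit Defensive.
Local Open Scope classical_set_scope.

Definition P_space (X : topologicalType) : Prop :=
  forall F : nat -> set X, (forall n, open (F n)) -> open (\bigcap_n F n).

(* Y (a subspace of X) is Menger: for each sequence (U_n) of covers of Y by
   open sets (open in X; equivalently traces of those are the open covers of
   the subspace Y), there are finite V_n subset of U_n whose unions cover Y. *)
Definition Menger_set (X : topologicalType) (Y : set X) : Prop :=
  forall U : nat -> set (set X),
    (forall n, forall A, U n A -> open A) ->
    (forall n, Y `<=` \bigcup_(A in U n) A) ->
    exists V : nat -> set (set X),
      (forall n, finite_set (V n) /\ V n `<=` U n) /\
      Y `<=` \bigcup_n \bigcup_(A in V n) A.

Definition locally_Menger_set (X : topologicalType) (Y : set X) : Prop :=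
  forall x, Y x -> exists (O Z : set X),
    open O /\ O x /\ Z `<=` Y /\ Menger_set Z /\ O `&` Y `<=` Z.

Definition locally_Menger (X : topologicalType) : Prop :=
  locally_Menger_set [set: X].

Definition locally_countable_family (X : topologicalType) (L : Type)
  (S : L -> set X) : Prop :=
  forall x : X, exists W : set X, nbhs x W /\
    countable [set a : L | S a `&` W !=set0].

(* Main.v *)
Require Import Defs.
From mathcomp Require Import all_boot all_order.
From mathcomp Require Import all_classical topology.
Local Open Scope classical_set_scope.

Lemma Menger_set0 (X : topologicalType) : Menger_set (@set0 X).
Proof.
move=> U _ _; exists (fun _ => set0); split => // n; split; [exact: finite_set0|by []].
Qed.

Definition unp (m : nat) : option (nat * nat) := pickle_inv m.
Lemma unpK (m : nat) : oapp pickle m (unp m) = m.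
Proof. exact: pickle_invK. Qed.
Lemma unp_pickle (p : nat * nat) : unp (pickle p) = Some p.
Proof. exact: pickleK_inv. Qed.

Lemma Menger_bigcup (X : topologicalType) (Z : nat -> set X) :
  (forall k, Menger_set (Z k)) -> Menger_set (\bigcup_k Z k).
Proof.
move=> HZ U Uo Ucov.
have : forall k, exists V : nat -> set (set X),
    (forall n, finite_set (V n) /\ V n `<=` U (pickle (k, n))) /\
    Z k `<=` \bigcup_n \bigcup_(A in V n) A.
  move=> k; apply: HZ => [n|n]; first exact: Uo.
  by move=> y Zy; apply: Ucov; exists k.
move=> /choice[W HW].
exists (fun m => match unp m with
                 | Some (k, n) => W k n | None => set0 end).
split.
- move=> m; case E: (unp m) => [[k n]|].
    have := unpK m; rewrite E /= => <-; exact: (HW k).1 n.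
  by split; [exact: finite_set0|by []].
- move=> y [k _ Zy]; have [_ H] := HW k; have [n _ [A VA Ay]] := H y Zy.
  by exists (pickle (k, n)) => //; rewrite unp_pickle; exists A.
Qed.

Theorem theorem4p6 (X : topologicalType) (L : Type) (S : L -> set X) :
  P_space X ->
  \bigcup_(a in [set: L]) S a = [set: X] ->
  (forall a, closed (S a)) ->
  (forall a, locally_Menger_set (S a)) ->
  locally_countable_family S ->
  locally_Menger X.
Proof.
move=> HP Hcov Hcl HLM Hlc x _.
have [W [Wx Cc]] := Hlc x.
move: Wx; rewrite nbhsE => -[B [Bo Bx] BW].
have /countable_injP [f finj] := Cc.
have step : forall n, exists GZ : set X * set X,
    open GZ.1 /\ GZ.1 x /\ Menger_set GZ.2 /\
    forall a, S a `&` W !=set0 -> f a = n -> GZ.1 `&` S a `<=` GZ.2.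
  move=> n.
  case: (pselect (exists a, S a `&` W !=set0 /\ f a = n)) => [[a0 [Ca0 fa0]]|Hno].
  - have Heq : forall a, S a `&` W !=set0 -> f a = n -> a = a0.
      move=> a Ca fa; apply: finj; rewrite ?inE //; congruence.
    case: (pselect (S a0 x)) => Sx.
    + have [O [Z [Oo [Ox [ZS [ZM OZ]]]]]] := HLM a0 x Sx.
      exists (O, Z); split => //; split => //; split => //=.
      by move=> a Ca fa; rewrite (Heq a Ca fa).
    + exists (~` S a0, set0); split; first exact: closed_openC.
      split => //; split; first exact: Menger_set0.
      by move=> a Ca fa; rewrite (Heq a Ca fa) => y [ny Sy]; exact: ny Sy.
  - exists (setT, set0); split; first exact: openT.
    split => //; split; first exact: Menger_set0.
    by move=> a Ca fa; exfalso; apply: Hno; exists a.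
have /choice [g Hg] := step.
exists (B `&` \bigcap_n (g n).1), (\bigcup_n (g n).2).
split.
  apply: openI => //; apply: HP => n; exact: (Hg n).1.
split; first by split => // n _; exact: (Hg n).2.1.
split; first by [].
split; first by apply: Menger_bigcup => n; exact: (Hg n).2.2.1.
move=> y [[By Gy] _].
have : [set: X] y by [].
rewrite -Hcov => -[a _ Say].
have Ca : S a `&` W !=set0 by exists y; split => //; exact: BW.
exists (f a) => //; apply: ((Hg (f a)).2.2.2 a Ca erefl); split => //.
exact: Gy.
Qed.
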